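(* Let $L$ be a minimal Koszul $L_\infty$-algebra and let $W=L^{(1)}$ be its weight one part. Then the canonical strict morphism of $L_\infty$-algebras $\mathbb{L}_\infty(W)\to L$ (extending the inclusion $W\subseteq L$) is surjective; that is, $L$ is generated in weight $1$.
   Context: Over $\mathbb Q$. An $L_\infty$-algebra $L$ (operations $l_n$ of degree $n-2$) is Koszul if it is equipped with a weight grading $L=\bigoplus_{w\ge1}L^{(w)}$ such that each $l_n$ is homogeneous of weight $2-n$ and the cochain complex $C^{CE}_*(L)^{(0)}\xrightarrow{b}C^{CE}_*(L)^{(1)}\xrightarrow{b}\cdots$ is exact, where $C^{CE}_*(L)=(\Lambda^c(sL),d+b)$ is the Chevalley–Eilenberg complex (cofree cocommutative coalgebra on $sL$ with the coderivation encoding the $l_n$), weight graded by letting $s$ have weight $-1$ (so $d+b$ raises weight by 1). $L$ is minimal if its differential is zero. $\mathbb{L}_\infty(W)$ denotes the free $L_\infty$-algebra on $W$; a strict morphism is one commuting with all operations. *)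

(* Defs.v *)
From HB Require Import structures.
From mathcomp Require Import all_boot all_order all_algebra.
Set Implicit Arguments. Unset Strict Implicit. Unset Printing Implicit Defensive.
Import Order.TTheory GRing.Theory Num.Theory.
Local Open Scope ring_scope.

Section Linf.
Variable V : lmodType rat.
(* hom d w x  <->  x lies in L_d^{(w)} (homological degree d, weight w). *)
Variable hom : int -> nat -> V -> Prop.
(* l xs = l_n(x_1,...,x_n) with n = size xs (only n >= 1 is ever used). *)
Variable l : seq V -> V.

(* A letter (d, w, x) is the element s x of sL, x in L_d^{(w)}. *)
Definition letter := (int * nat * V)%type.
Definition word := seq letter.          (* a monomial s x_1 ... s x_k *)
Definition fsum := seq (rat * word).

Definition ldeg (p : letter) : int := p.1.1.
Definition lwt (p : letter) : nat := p.1.2.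
Definition lvec (p : letter) : V := p.2.
Definition wf_letter (p : letter) : Prop := hom (ldeg p) (lwt p) (lvec p).
Definition wf_word (u : word) : Prop := forall p, p \in u -> wf_letter p.
Definition wf_fsum (c : fsum) : Prop := forall p, p \in c -> wf_word p.2.

(* L = (+)_{d in Z, w >= 1} L_d^{(w)} as bigraded Q-vector space. *)
Definition graded_space : Prop :=
  [/\ (forall d w, hom d w 0),
      (forall d w a x y, hom d w x -> hom d w y -> hom d w (a *: x + y)),
      (forall d x, hom d 0%N x -> x = 0),
      (forall x : V, exists s : word, wf_word s /\ x = \sum_(p <- s) lvec p)
    & (forall s : word, wf_word s -> uniq (map fst s) ->
         \sum_(p <- s) lvec p = 0 -> forall p, p \in s -> lvec p = 0)].

Definition out_letter (xs : word) : letter :=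
  (\sum_(p <- xs) ldeg p + (size xs)%:Z - 2,
   ((\sum_(p <- xs) lwt p)%N + 2 - size xs)%N,
   l (map lvec xs)).

(* l_n multilinear, graded antisymmetric, homogeneous of degree n-2, weight 2-n *)
Definition linfty_ops : Prop :=
  [/\ (forall u v a x y,
         l (u ++ (a *: x + y) :: v) = a *: l (u ++ x :: v) + l (u ++ y :: v)),
      (forall u v dx wx x dy wy y, hom dx wx x -> hom dy wy y ->
         l (u ++ x :: y :: v) = - ((-1) ^+ (absz dx * absz dy)) *: l (u ++ y :: x :: v))
    & (forall xs : word, (0 < size xs)%N -> wf_word xs -> wf_letter (out_letter xs))].

(* Koszul signs in sL (degree of s x is d + 1). *)
Definition sodd (p : letter) : bool := ~~ odd (absz (ldeg p)).
Definition ksign (p q : letter) : rat := if sodd p && sodd q then -1 else 1.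

(* Koszul sign of the unshuffle selecting the letters marked true. *)
Fixpoint usign (m : seq bool) (u : word) : rat :=
  match m, u with
  | b :: m', x :: u' =>
      (if b then 1 else \prod_(y <- mask m' u') ksign x y) * usign m' u'
  | _, _ => 1
  end.

(* decalage sign: q_n(sx_1,..,sx_n) = (-1)^(sum_i (n-i)|x_i|) s l_n(x_1,..,x_n) *)
Fixpoint dsign (xs : word) : rat :=
  match xs with
  | [::] => 1
  | x :: xs' => (if odd (size xs') && odd (absz (ldeg x)) then -1 else 1) * dsign xs'
  end.

Fixpoint masks (k : nat) : seq (seq bool) :=
  if k is k'.+1 then [seq b :: m | b <- [:: true; false], m <- masks k'] else [:: [::]].

(* The coderivation of Lambda^c(sL) extending the q_n for n >= nmin:
   Q(v_1...v_k) = sum_n sum_{unshuffles} eps q_n(v_s1..v_sn) v_s(n+1)...v_sk. *)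
Definition coder_word (nmin : nat) (u : word) : fsum :=
  [seq (usign m u * dsign (mask m u), out_letter (mask m u) :: mask (map negb m) u)
  | m <- masks (size u) & (nmin <= count id m)%N].

Definition scale_fs (a : rat) (c : fsum) : fsum := [seq (a * p.1, p.2) | p <- c].
Definition coder (nmin : nat) (c : fsum) : fsum :=
  flatten [seq scale_fs p.1 (coder_word nmin p.2) | p <- c].

(* Lambda^c(sL) = formal combinations of words modulo multilinearity and
   graded symmetry; inR c  <->  c represents 0 in Lambda^c(sL). *)
Definition coef (c : fsum) (u : word) : rat := \sum_(p <- c | p.2 == u) p.1.
Definition feq (c c' : fsum) : Prop := forall u, coef c u = coef c' u.

Definition basic_rel (r : fsum) : Prop :=
  (exists u v d w a x y, [/\ wf_word u, wf_word v, hom d w x, hom d w y &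
     r = [:: (1, u ++ (d, w, a *: x + y) :: v); (- a, u ++ (d, w, x) :: v);
             (-1, u ++ (d, w, y) :: v)]])
  \/ (exists u v p q, [/\ wf_word u, wf_word v, wf_letter p, wf_letter q &
     r = [:: (1, u ++ p :: q :: v); (- ksign p q, u ++ q :: p :: v)]]).

Definition inR (c : fsum) : Prop :=
  exists rs : seq (rat * fsum), (forall r, r \in rs -> basic_rel r.2) /\
    feq c (flatten [seq scale_fs r.1 r.2 | r <- rs]).

(* (L, l) is an L_infinity-algebra with weight grading: the coderivation
   d + b encoding all the l_n squares to zero on C^CE(L). *)
Definition Linfty_algebra : Prop :=
  [/\ graded_space, linfty_ops &
      forall u : word, wf_word u -> inR (coder 1 (coder 1 [:: (1, u)]))].

Definition minimal : Prop := forall x : V, l [:: x] = 0.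

(* weight of s x_1 ... s x_k: sum_i (w_i - 1)  (s has weight -1) *)
Definition word_weight (u : word) : int := \sum_(p <- u) ((lwt p)%:Z - 1).

(* Koszul: C^(0) -b-> C^(1) -b-> ... exact, i.e. exact at C^(i) for i >= 1,
   where b is the coderivation encoding the l_n, n >= 2. *)
Definition koszul : Prop :=
  forall i : int, 1 <= i -> forall c : fsum, wf_fsum c ->
    (forall p, p \in c -> word_weight p.2 = i) -> inR (coder 2 c) ->
    exists c' : fsum, [/\ wf_fsum c', (forall p, p \in c' -> word_weight p.2 = i - 1)
                        & inR (coder 2 c' ++ scale_fs (-1) c)].

(* L is generated in weight 1: the image of the canonical strict morphism
   L_oo(W) -> L, i.e. the smallest subspace containing W = L^(1) and closed
   under all l_n, is all of L. *)
Definition generated_in_weight_one : Prop :=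
  forall S : V -> Prop, S 0 -> (forall a x y, S x -> S y -> S (a *: x + y)) ->
    (forall d x, hom d 1%N x -> S x) ->
    (forall xs : seq V, (0 < size xs)%N -> (forall x, x \in xs -> S x) -> S (l xs)) ->
    forall x, S x.

End Linf.

(* Main.v *)
Require Import Defs.
From mathcomp Require Import all_boot all_order all_algebra zify.
Set Implicit Arguments. Unset Strict Implicit. Unset Printing Implicit Defensive.
Import Order.TTheory GRing.Theory Num.Theory.
Local Open Scope ring_scope.

Section P.
Variable V : lmodType rat.

Definition val (u : word V) : V := if u is [:: q] then lvec q else 0.
Definition Phi (c : fsum V) : V := \sum_(p <- c) p.1 *: val p.2.

Lemma Phi_cat c1 c2 : Phi (c1 ++ c2) = Phi c1 + Phi c2.
Proof. by rewrite /Phi big_cat. Qed.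

Lemma Phi_scale a c : Phi (scale_fs a c) = a *: Phi c.
Proof.
rewrite /Phi /scale_fs big_map scaler_sumr; apply: eq_bigr => p _.
by rewrite /= scalerA.
Qed.

Lemma Phi_coef c (s : seq (word V)) : uniq s -> (forall p, p \in c -> p.2 \in s) ->
  Phi c = \sum_(u <- s) coef c u *: val u.
Proof.
move=> us; elim: c => [|p c IH] H.
  rewrite /Phi big_nil big1 // => u _; by rewrite /coef big_nil scale0r.
rewrite /Phi big_cons -/(Phi c) IH; last by move=> q qc; apply: H; rewrite in_cons qc orbT.
have cc u : coef (p :: c) u = (if p.2 == u then p.1 else 0) + coef c u.
  by rewrite /coef big_cons; case: ifP; rewrite ?add0r.
rewrite [RHS](eq_bigr (fun u => (if p.2 == u then p.1 else 0) *: val u + coef c u *: val u)); last first.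
  by move=> u _; rewrite -scalerDl cc.
rewrite big_split /=; congr (_ + _).
rewrite (bigD1_seq p.2) //=; last by apply: H; rewrite in_cons eqxx.
rewrite eqxx big1 ?addr0 // => u; rewrite eq_sym => /negbTE ->; by rewrite scale0r.
Qed.

Lemma Phi_feq c c' : feq c c' -> Phi c = Phi c'.
Proof.
move=> E.
set s := undup (map snd (c ++ c')).
have us : uniq s by rewrite undup_uniq.
rewrite (Phi_coef us) ?(Phi_coef (c := c') us).
- by apply: eq_bigr => u _; rewrite E.
- by move=> p pc; rewrite mem_undup map_f // mem_cat pc orbT.
- by move=> p pc; rewrite mem_undup map_f // mem_cat pc.
Qed.

Lemma val_cat (u v : word V) q : val (u ++ q :: v) = if (u == [::]) && (v == [::]) then lvec q else 0.
Proof. by case: u => [|a [|b u]]; case: v. Qed.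

Lemma val_long (u v : word V) p q : val (u ++ p :: q :: v) = 0.
Proof. by case: u => [|a [|b u]]. Qed.

Lemma Phi_basic hom r : basic_rel hom r -> Phi r = 0.
Proof.
case=> [[u [v [d [w [a [x [y [_ _ _ _ ->]]]]]]]]|[u [v [p [q [_ _ _ _ ->]]]]]].
  rewrite /Phi !big_cons big_nil /= !val_cat /=.
  case: ifP => _; last by rewrite !scaler0 !addr0.
  by rewrite scale1r addr0 scaleNr scaleN1r -opprD subrr.
by rewrite /Phi !big_cons big_nil /= !val_long !scaler0 !addr0.
Qed.

Lemma Phi_inR hom c : inR hom c -> Phi c = 0.
Proof.
case=> rs [Hr E]; rewrite (Phi_feq E).
elim: rs Hr {E} => [|r rs IH] Hr; first by rewrite /Phi big_nil.
rewrite /= Phi_cat Phi_scale (Phi_basic (Hr r _)) ?in_cons ?eqxx // scaler0 add0r.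
by apply: IH => r' H; apply: Hr; rewrite in_cons H orbT.
Qed.

End P.

Section Q.
Variable V : lmodType rat.

Lemma masks_size k m : m \in masks k -> size m = k.
Proof.
elim: k m => [|k IH] m /=; first by rewrite inE => /eqP ->.
move=> H; have [[b m'] /= [_ Hm ->]] := (@allpairsP _ _ _ cons [:: true; false] (masks k) m H).
by rewrite /= (IH _ Hm).
Qed.

Lemma mask_negb_nil (m : seq bool) (u : word V) :
  size m = size u -> mask (map negb m) u = [::] -> mask m u = u.
Proof.
elim: m u => [|b m IH] [|x u] //= [] E; case: b => //= H.
by rewrite IH.
Qed.

Lemma count_le_size (m : seq bool) : (count id m <= size m)%N.
Proof. exact: count_size. Qed.

Lemma Phi_S (S : V -> Prop) (c : fsum V) : S 0 -> (forall a x y, S x -> S y -> S (a *: x + y)) ->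
  (forall p, p \in c -> forall q, p.2 = [:: q] -> S (lvec q)) -> S (Phi c).
Proof.
move=> S0 SC; elim: c => [|p c IH] H; first by rewrite /Phi big_nil.
rewrite /Phi big_cons -/(Phi c); apply: SC; last first.
  by apply: IH => p' H' q E; apply: (H p') => //; rewrite in_cons H' orbT.
case E: p.2 => [|q [|q' r]] /=; try exact: S0.
by apply: (H p) => //; rewrite in_cons eqxx.
Qed.

Lemma l_zero (hom : int -> nat -> V -> Prop) l (u v : seq V) :
  linfty_ops hom l -> l (u ++ 0 :: v) = 0.
Proof.
case=> H _ _; have := H u v 1 0 0.
rewrite scaler0 addr0 scale1r => E.
by have := congr1 (fun z => z - l (u ++ 0 :: v)) E; rewrite subrr addrK.
Qed.

Lemma term_le_sum (T : eqType) (f : T -> int) (s : seq T) q :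
  (forall p, p \in s -> 0 <= f p) -> q \in s -> f q <= \sum_(p <- s) f p.
Proof.
elim: s => [|x s IH] // H; rewrite in_cons big_cons => /orP [/eqP ->|qs].
  rewrite lerDl big_seq; apply: sumr_ge0 => p ps; apply: H.
  by rewrite in_cons ps orbT.
rewrite (le_trans (IH _ qs)) ?lerDr ?H ?in_cons ?eqxx //.
by move=> p ps; apply: H; rewrite in_cons ps orbT.
Qed.
End Q.

Lemma coder_mem (V : lmodType rat) (l : seq V -> V) (c : fsum V) q :
  q \in coder l 2 c -> exists p m, [/\ p \in c, m \in masks (size p.2), (2 <= count id m)%N &
     q.2 = out_letter l (mask m p.2) :: mask (map negb m) p.2].
Proof.
case/flatten_mapP => p pc /mapP [r] /mapP [m]; rewrite mem_filter => /andP [cm mm] -> -> /=.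
by exists p, m.
Qed.

Theorem proposition2p24 (V : lmodType rat) (hom : int -> nat -> V -> Prop)
  (l : seq V -> V) :
  Linfty_algebra hom l -> minimal l -> koszul hom l ->
  generated_in_weight_one hom l.
Proof.
case=> [[GS0 GSlin GSw0 GSdec GSuniq] LO _] _ K S S0 SC S1 Sl.
have Shom : forall n w d x, (w <= n)%N -> hom d w x -> S x.
  elim=> [|n IH] w d x.
    by rewrite leqn0 => /eqP -> /GSw0 ->.
  case: w => [|[|w']] Hw Hx; first by rewrite (GSw0 _ _ Hx).
    exact: S1 Hx.
  set c : fsum V := [:: (1, [:: (d, w'.+2, x)])].
  have [] := K (w'.+1)%:Z _ c.
  - by [].
  - by move=> p; rewrite inE => /eqP -> r; rewrite inE => /eqP ->.
  - move=> p; rewrite inE => /eqP -> /=.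
    rewrite /word_weight big_seq1 /lwt /=; lia.
  - by exists [::]; split.
  move=> c' [wfc' wc' HR].
  have := Phi_inR HR; rewrite Phi_cat Phi_scale /Phi big_seq1 /= scale1r scaleN1r.
  move/eqP; rewrite subr_eq0 => /eqP <-.
  apply: Phi_S => // q' /coder_mem [p [m [pc mm cm E]]] q.
  rewrite E => -[Eq En].
  have Hs := masks_size mm.
  have Em := mask_negb_nil Hs En.
  rewrite -Eq /lvec /out_letter /= Em.
  have sz : (2 <= size p.2)%N by rewrite -Hs (leq_trans cm) // count_size.
  have wfp := wfc' p pc.
  case Hz: (has (fun r => lwt r == 0%N) p.2).
    case/hasP: Hz => r rp /eqP r0.
    have : lvec r = 0 by apply: (GSw0 (ldeg r)); rewrite -r0; exact: wfp.
    move=> lr0.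
    have : 0 \in map (@lvec V) p.2 by rewrite -lr0 map_f.
    case/splitPr => p1 p2; rewrite (l_zero _ _ LO); exact: S0.
  apply: Sl; first by rewrite size_map; apply: leq_trans sz.
  move=> y /mapP [r rp ->].
  have wr := wfp r rp.
  apply: (IH (lwt r) (ldeg r)) => //.
  have nz : (0 < lwt r)%N.
    by move/negbT: Hz; rewrite -all_predC => /allP /(_ r rp) /=; rewrite lt0n.
  have H1 : forall r', r' \in p.2 -> 0 <= (lwt r')%:Z - 1.
    move=> r' rp'; move/negbT: Hz; rewrite -all_predC => /allP /(_ r' rp') /=.
    rewrite -lt0n => h; lia.
  have := term_le_sum (f := fun r : letter V => (lwt r)%:Z - 1) H1 rp.
  rewrite -/(word_weight p.2) (wc' p pc) => h; lia.
move=> x; have [s [wfs ->]] := GSdec x.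
elim: s wfs => [|p s IHs] wfs; first by rewrite big_nil.
rewrite big_cons -[lvec p]scale1r; apply: SC.
  by apply: (Shom (lwt p) (lwt p) (ldeg p)) => //; apply: wfs; rewrite in_cons eqxx.
by apply: IHs => r rs; apply: wfs; rewrite in_cons rs orbT.
Qed.
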